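(* Let $f$ be the morphism on $\{0,1\}$ given by $f(0)=10$, $f(1)=0101$, so that $f^2(0)=010110$ and $f^2(1)=100101100101$. The infinite fixed point of $f^2$ beginning with $0$ is $3$-automatic.
   Context: For an integer $q\ge 2$, a sequence is $q$-automatic if it is the image under a letter-to-letter map of a fixed point of a morphism all of whose letter-images have length $q$. *)

(* Defs.v *)
From mathcomp Require Import all_boot.
Set Implicit Arguments. Unset Strict Implicit. Unset Printing Implicit Defensive.

Definition f (a : nat) : seq nat :=
  if a == 0 then [:: 1; 0] else [:: 0; 1; 0; 1].

Definition morph_word (g : nat -> seq nat) (w : seq nat) : seq nat :=
  flatten (map g w).

Definition f2 (a : nat) : seq nat := morph_word f (f a).

(* The infinite fixed point of f^2 beginning with 0: it is the limit of
   (f^2)^k(0); since f^2(0) begins with 0 and |(f^2)^k(0)| >= 6^k, the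
   n-th letter is already the n-th letter of (f^2)^(n+1)(0). *)
Definition fixpt_f2 (n : nat) : nat :=
  nth 0 (iter n.+1 (morph_word f2) [:: 0]) n.

(* q-automatic: image under a letter-to-letter (coding) map tau of a fixed
   point u of a q-uniform morphism phi on a finite alphabet 'I_k.
   u is a fixed point of phi iff phi(u) = u, i.e. for all n and i < q,
   u (q*n + i) is the i-th letter of phi (u n). *)
Definition automatic (T : Type) (q : nat) (x : nat -> T) : Prop :=
  exists (k : nat) (phi : 'I_k -> q.-tuple 'I_k) (u : nat -> 'I_k)
         (tau : 'I_k -> T),
    (forall n (i : 'I_q), u (q * n + i) = tnth (phi (u n)) i) /\
    (forall n, x n = tau (u n)).

(* Main.v *)
Require Import Defs.
From mathcomp Require Import all_boot.
From mathcomp Require Import zify.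
Set Implicit Arguments. Unset Strict Implicit.

Definition mw {A B : Type} (g : A -> seq B) (w : seq A) : seq B := flatten (map g w).

Lemma morph_cat (A B : Type) (g : A -> seq B) w1 w2 :
  mw g (w1 ++ w2) = mw g w1 ++ mw g w2.
Proof. by rewrite /mw map_cat flatten_cat. Qed.

Lemma morph_comp (A B C : Type) (g : B -> seq C) (h : A -> seq B) w :
  mw g (mw h w) = mw (fun a => mw g (h a)) w.
Proof.
elim: w => [|a w IH] //=.
move: IH; rewrite /mw /= map_cat flatten_cat => -> //.
Qed.

Lemma morph_ext (A B : Type) (g h : A -> seq B) w :
  (forall a, g a = h a) -> mw g w = mw h w.
Proof. by move=> E; rewrite /mw (eq_map E). Qed.

Lemma size_morph (A B : Type) (g : A -> seq B) q w :
  (forall a, size (g a) = q) -> size (mw g w) = q * size w.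
Proof.
move=> Hs; elim: w => [|a w IH] /=; first by rewrite muln0.
by rewrite /mw /= size_cat -/(mw g w) IH Hs mulnS.
Qed.

Lemma nth_morph (A B : Type) (g : A -> seq B) q (d : B) (da : A) w n :
  (forall a, size (g a) = q) -> n < q * size w ->
  nth d (mw g w) n = nth d (g (nth da w (n %/ q))) (n %% q).
Proof.
move=> Hs; elim: w n => [|a w IH] n /=; first by rewrite muln0.
move=> Hn.
have q0 : 0 < q by move: Hn; case: q {Hs IH} => //; rewrite mul0n.
rewrite /mw /= -/(mw g w) nth_cat Hs.
case: ltnP => Hnq.
  by rewrite divn_small // modn_small.
have -> : n = (n - q) + q by rewrite subnK.
rewrite addnK divnDr ?dvdnn // divnn q0 addn1 /= modnDr.
by apply: IH; move: Hn; rewrite mulnS; lia.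
Qed.

Definition G (a : nat) : seq bool := if a == 0 then [:: false] else [:: true; true].
Definition Fw (b : bool) : seq nat :=
  if b then [:: 1; 0; 0; 1; 0; 1] else [:: 0; 1; 0; 1; 1; 0].
Definition sig (b : bool) : seq bool := mw G (Fw b).

Definition W k := iter k (mw f2) [:: 0].
Lemma W_def k : iter k (morph_word f2) [:: 0] = W k. Proof. by []. Qed.
Definition S k := iter k (mw sig) [:: false].

Lemma f2_eq w : mw f2 w = mw Fw (mw G w).
Proof. rewrite morph_comp; apply: morph_ext => a; rewrite /f2 /G /f; by case: (a == 0). Qed.

Lemma WS k : W k.+1 = mw Fw (S k) /\ mw G (W k) = S k.
Proof.
elim: k => [|k [IH1 IH2]]; first by [].
have H2 : mw G (W k.+1) = S k.+1.
  by rewrite IH1 morph_comp /=.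
split => //.
by rewrite /= -/(W k.+1) f2_eq H2.
Qed.

Lemma size_sig b : size (sig b) = 9. Proof. by case: b. Qed.
Lemma size_Fw b : size (Fw b) = 6. Proof. by case: b. Qed.

Lemma size_S k : size (S k) = 9 ^ k.
Proof. elim: k => [|k IH] //=; by rewrite (size_morph _ size_sig) IH expnS. Qed.

Lemma S_prefix k : exists t, S k.+1 = S k ++ t.
Proof.
elim: k => [|k [t Ht]]; first by exists (behead (sig false)).
exists (mw sig t).
have -> : S k.+2 = mw sig (S k.+1) by [].
by rewrite {1}Ht morph_cat.
Qed.

Lemma S_mono k k' n : k <= k' -> n < 9 ^ k -> nth false (S k) n = nth false (S k') n.
Proof.
move=> /subnK <- Hn; elim: (k' - k) => [|d IH] //.
rewrite IH addSn; have [t ->] := S_prefix (d + k).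
rewrite nth_cat size_S ifT //; apply: leq_trans Hn _.
by rewrite leq_exp2l // leq_addl.
Qed.

Definition z n := nth false (S n) n.

Lemma lt_pow9 n : n < 9 ^ n.
Proof. elim: n => [|n IH] //; rewrite expnS; lia. Qed.

Lemma z_S k n : n < 9 ^ k -> nth false (S k) n = z n.
Proof.
move=> Hn; case: (leqP k n) => H.
  by apply: S_mono.
by rewrite /z (S_mono (k:=n) (k':=k)) ?lt_pow9 // ltnW.
Qed.

Lemma z_rec n : z n = nth false (sig (z (n %/ 9))) (n %% 9).
Proof.
rewrite -(z_S (k := n.+1)); last by rewrite expnS; have := lt_pow9 n; lia.
rewrite [S _]/= (@nth_morph _ _ _ _ false false _ _ size_sig) -/(S n) ?size_S; last by rewrite -expnS; have := lt_pow9 n.+1; lia.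
rewrite z_S //; have := lt_pow9 n; lia.
Qed.

Lemma fix_eq n : fixpt_f2 n = nth 0 (Fw (z (n %/ 6))) (n %% 6).
Proof.
rewrite /fixpt_f2 W_def (proj1 (WS n)) (@nth_morph _ _ _ _ 0 false _ _ size_Fw); last first.
  by rewrite size_S; have := lt_pow9 n; lia.
rewrite z_S //; have := lt_pow9 n; lia.
Qed.

Definition code (a : bool) (p : nat) (c : bool) (e : nat) : nat :=
  12 * a + 4 * p + 2 * c + e.

Definition dA (s : nat) : bool := s %/ 12 == 1.
Definition dP (s : nat) : nat := (s %/ 4) %% 3.
Definition dC (s : nat) : bool := odd (s %/ 2).
Definition dE (s : nat) : nat := s %% 2.

Lemma decode a p c e : p < 3 -> e < 2 ->
  [/\ dA (code a p c e) = a, dP (code a p c e) = p,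
      dC (code a p c e) = c & dE (code a p c e) = e].
Proof.
move=> Hp He; rewrite /dA /dP /dC /dE /code.
case: a; case: c; (case: p Hp => [|[|[|p]]] //; case: e He => [|[|e]] //).
Qed.

Lemma code_lt a p c e : p < 3 -> e < 2 -> code a p c e < 24.
Proof. rewrite /code; case: a; case: c; lia. Qed.

Definition trans (s i : nat) : nat :=
  code (dC s) ((3 * dE s + i) %/ 2)
       (nth false (sig (dA s)) (3 * dP s + (3 * dE s + i) %/ 2))
       ((dE s + i) %% 2).

Definition un (n : nat) : nat := code (z (n %/ 6)) ((n %/ 2) %% 3) (z (n %/ 2)) (n %% 2).

Lemma un_lt n : un n < 24.
Proof. apply: code_lt; by rewrite ltn_mod. Qed.

Lemma trans_ok n i : i < 3 -> un (3 * n + i) = trans (un n) i.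
Proof.
move=> Hi; rewrite /trans.
have [-> -> -> ->] := decode (z (n %/ 6)) (z (n %/ 2)) (ltn_pmod (n %/ 2) (isT : 0 < 3)) (ltn_pmod n (isT : 0 < 2)).
rewrite /un.
have E1 : (3 * n + i) %/ 6 = n %/ 2 by lia.
have E2 : (3 * n + i) %/ 2 %% 3 = (3 * (n %% 2) + i) %/ 2 by lia.
have E3 : (3 * n + i) %% 2 = (n %% 2 + i) %% 2 by lia.
have E4 : (3 * n + i) %/ 2 %/ 9 = n %/ 6 by lia.
have E5 : (3 * n + i) %/ 2 %% 9 = 3 * ((n %/ 2) %% 3) + (3 * (n %% 2) + i) %/ 2 by lia.
by rewrite E1 E2 E3 (z_rec ((3 * n + i) %/ 2)) E4 E5.
Qed.

Definition tauf (s : 'I_24) : nat := nth 0 (Fw (dA s)) (2 * dP s + dE s).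

Theorem mainTheorem6 : automatic 3 fixpt_f2.
Proof.
exists 24, (fun s : 'I_24 => [tuple (inord (trans s i) : 'I_24) | i < 3]),
  (fun n => Ordinal (un_lt n)), tauf.
split.
  move=> n i; apply: val_inj; rewrite tnth_mktuple /= inordK.
    by rewrite trans_ok.
  by rewrite -trans_ok ?un_lt.
move=> n; rewrite /tauf /= fix_eq /un.
have [-> -> _ ->] := decode (z (n %/ 6)) (z (n %/ 2)) (ltn_pmod (n %/ 2) (isT : 0 < 3)) (ltn_pmod n (isT : 0 < 2)).
congr nth; lia.
Qed.
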